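(* Under the conical assumption (all dependent variables have vanishing covariant derivative in the radial direction $r$, measured from the cone apex), the steady compressible Euler equations in a 3D Euclidean space with coordinates $(\xi^1,\xi^2,r)$, where $r$ is orthogonal to the surface coordinates and has unit scale, reduce to the following system on the surface of the unit sphere: \begin{gather*} \frac{\partial}{\partial \xi^\beta}\left(\rho\sqrt{g}v^\beta\right) + 2\rho \sqrt{g}V^3 = 0,\\ \frac{\partial }{\partial\xi^\beta}\left(\sqrt{g}\left[\rho v^\alpha v^\beta + g^{\alpha\beta}P\right]\right) + \overset{(g)}{\Gamma}{}_{\gamma}{}^{\alpha}{}_{\nu}\,\sqrt{g}\left[\rho v^\gamma v^\nu+g^{\gamma\nu}P\right] + 3\rho\sqrt{g}v^\alpha V^3 = 0,\\ v^\alpha\frac{\partial V^3}{\partial \xi^\alpha} - q^2_c = 0,\\ \frac{\partial}{\partial \xi^\beta}\left( \sqrt{g}\left[\rho E+P\right] v^\beta \right) + 2\sqrt{g}\left[\rho E+P\right] V^3 =0. \end{gather*}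
   Context: Einstein summation is used; Greek indices take values 1,2. $\rho$ is density, $v^\beta = r\tilde v^\beta$ are the rescaled (r-independent) surface velocity components, $V^3$ is the radial velocity component, $E=e+\frac12|\mathbf V|^2$ is total specific energy with $e$ the specific thermal energy, $P=P(\rho,e)$ the pressure, $g_{\alpha\beta}=\tilde g_{\alpha\beta}/r^2$ the metric of the unit sphere in arbitrary surface coordinates $\xi^\alpha$ (with $r$-dependence removed), $g^{\alpha\beta}$ its inverse, $g$ its determinant, $q_c=\sqrt{g_{\alpha\beta}v^\alpha v^\beta}$ the crossflow speed, and $\overset{(g)}{\Gamma}{}_{\gamma}{}^{\alpha}{}_{\nu}$ the Christoffel symbol (of the second kind, upper index $\alpha$, lower indices $\gamma,\nu$) of the metric $g_{\alpha\beta}$. The starting equations are the steady Euler equations in coordinate-free form: $(\rho\sqrt{G}V^j)_{|j}=0$, $(\sqrt{G}[\rho V^iV^j+G^{ij}P])_{|j}=0$, $(\sqrt{G}[\rho E+P]V^j)_{|j}=0$, with $G_{ij}$ the 3D metric and $(\cdot)_{|j}$ the covariant derivative. *)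

(* Defs.v *)
From Stdlib Require Import Reals Lra.
From Coquelicot Require Import Coquelicot.
Open Scope R_scope.

(* Surface index alpha in {1,2}; 3D index in {xi^1, xi^2, r}. *)
Inductive ix := i1 | i2.
Inductive ix3 := s (a : ix) | rad.

Definition sum2 (f : ix -> R) : R := f i1 + f i2.
Definition sum3 (f : ix3 -> R) : R := f (s i1) + f (s i2) + f rad.

Definition delta2 (a b : ix) : R :=
  match a, b with i1, i1 => 1 | i2, i2 => 1 | _, _ => 0 end.
Definition delta3 (i j : ix3) : R :=
  match i, j with s a, s b => delta2 a b | rad, rad => 1 | _, _ => 0 end.

Definition fld2 := R -> R -> R.
Definition fld3 := R -> R -> R -> R.

Definition pd2 (a : ix) (f : fld2) (x y : R) : R :=
  match a with
  | i1 => Derive (fun t => f t y) x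
  | i2 => Derive (fun t => f x t) y
  end.
Definition pd3 (i : ix3) (F : fld3) (x y r : R) : R :=
  match i with
  | s i1 => Derive (fun t => F t y r) x
  | s i2 => Derive (fun t => F x t r) y
  | rad => Derive (fun t => F x y t) r
  end.

Definition det2 (g : ix -> ix -> fld2) (x y : R) : R :=
  g i1 i1 x y * g i2 i2 x y - g i1 i2 x y * g i2 i1 x y.
Definition sqrtg (g : ix -> ix -> fld2) (x y : R) : R := sqrt (det2 g x y).

(* Christoffel symbol Gamma_c^a_n of g (upper index a, lower c, n);
   ginv is the inverse metric g^{ab}. *)
Definition Gam2 (g ginv : ix -> ix -> fld2) (a c n : ix) (x y : R) : R :=
  / 2 * sum2 (fun l => ginv a l x y *
     (pd2 c (g l n) x y + pd2 n (g l c) x y - pd2 l (g c n) x y)).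

Definition Gmet (g : ix -> ix -> fld2) (i j : ix3) : fld3 :=
  fun x y r =>
    match i, j with
    | s a, s b => r ^ 2 * g a b x y
    | rad, rad => 1
    | _, _ => 0
    end.

Definition det3 (M : ix3 -> ix3 -> R) : R :=
  let A := s i1 in let B := s i2 in let C := rad in
  M A A * (M B B * M C C - M B C * M C B)
  - M A B * (M B A * M C C - M B C * M C A)
  + M A C * (M B A * M C B - M B B * M C A).

Definition sqrtG (g : ix -> ix -> fld2) (x y r : R) : R :=
  sqrt (det3 (fun i j => Gmet g i j x y r)).

(* Christoffel symbol Gamma_j^i_k of G; Ginv is the inverse metric G^{ij}. *)
Definition Gam3 (g : ix -> ix -> fld2) (Ginv : ix3 -> ix3 -> fld3)
  (i j k : ix3) (x y r : R) : R :=
  / 2 * sum3 (fun l => Ginv i l x y r *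
     (pd3 j (Gmet g l k) x y r + pd3 k (Gmet g l j) x y r
      - pd3 l (Gmet g j k) x y r)).

Definition cov1 g Ginv (W : ix3 -> fld3) (i j : ix3) (x y r : R) : R :=
  pd3 j (W i) x y r + sum3 (fun k => Gam3 g Ginv i j k x y r * W k x y r).

(* divergence T^j_{|j} of a contravariant vector density of weight 1
   (such as sqrt(G) rho V^j) *)
Definition divD1 g Ginv (T : ix3 -> fld3) (x y r : R) : R :=
  sum3 (fun j =>
    pd3 j (T j) x y r
    + sum3 (fun k => Gam3 g Ginv j j k x y r * T k x y r)
    - sum3 (fun k => Gam3 g Ginv k k j x y r * T j x y r)).

(* divergence T^{ij}_{|j} of a rank-2 contravariant tensor density of weight 1 *)
Definition divD2 g Ginv (T : ix3 -> ix3 -> fld3) (i : ix3) (x y r : R) : R :=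
  sum3 (fun j =>
    pd3 j (T i j) x y r
    + sum3 (fun l => Gam3 g Ginv i j l x y r * T l j x y r)
    + sum3 (fun l => Gam3 g Ginv j j l x y r * T i l x y r)
    - sum3 (fun l => Gam3 g Ginv l l j x y r * T i j x y r)).

Definition P3 (Pfun : R -> R -> R) (rho e : fld3) : fld3 :=
  fun x y r => Pfun (rho x y r) (e x y r).
Definition E3 g (e : fld3) (V : ix3 -> fld3) : fld3 :=
  fun x y r => e x y r + / 2 *
    sum3 (fun i => sum3 (fun j => Gmet g i j x y r * V i x y r * V j x y r)).

Definition Euler3D g Ginv (Pfun : R -> R -> R) (rho e : fld3) (V : ix3 -> fld3)
  (x y r : R) : Prop :=
  divD1 g Ginv (fun j x y r => sqrtG g x y r * rho x y r * V j x y r) x y r = 0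
  /\ (forall i : ix3,
        divD2 g Ginv (fun i j x y r => sqrtG g x y r *
            (rho x y r * V i x y r * V j x y r
             + Ginv i j x y r * P3 Pfun rho e x y r)) i x y r = 0)
  /\ divD1 g Ginv (fun j x y r => sqrtG g x y r *
            (rho x y r * E3 g e V x y r + P3 Pfun rho e x y r) * V j x y r) x y r = 0.

Definition conical g Ginv (rho e : fld3) (V : ix3 -> fld3) (x y r : R) : Prop :=
  pd3 rad rho x y r = 0 /\ pd3 rad e x y r = 0 /\
  (forall i, cov1 g Ginv V i rad x y r = 0).

Definition rho_s (rho : fld3) : fld2 := fun x y => rho x y 1.
Definition e_s (e : fld3) : fld2 := fun x y => e x y 1.
(* rescaled surface velocity v^a = r tilde V^a, taken at r = 1 *)
Definition v_s (V : ix3 -> fld3) (a : ix) : fld2 := fun x y => 1 * V (s a) x y 1.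
Definition V3_s (V : ix3 -> fld3) : fld2 := fun x y => V rad x y 1.
Definition P_s Pfun (rho e : fld3) : fld2 := fun x y => Pfun (rho_s rho x y) (e_s e x y).
Definition E_s g (e : fld3) (V : ix3 -> fld3) : fld2 := fun x y => E3 g e V x y 1.
Definition qc g (V : ix3 -> fld3) (x y : R) : R :=
  sqrt (sum2 (fun a => sum2 (fun b => g a b x y * v_s V a x y * v_s V b x y))).

Definition SurfaceSystem g ginv (Pfun : R -> R -> R) (rho e : fld3) (V : ix3 -> fld3)
  (x y : R) : Prop :=
  let rh := rho_s rho in let v := v_s V in let W := V3_s V in
  let P := P_s Pfun rho e in let E := E_s g e V in
  sum2 (fun b => pd2 b (fun x y => rh x y * sqrtg g x y * v b x y) x y)
    + 2 * rh x y * sqrtg g x y * W x y = 0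
  /\ (forall a : ix,
       sum2 (fun b => pd2 b (fun x y => sqrtg g x y *
               (rh x y * v a x y * v b x y + ginv a b x y * P x y)) x y)
       + sum2 (fun c => sum2 (fun n => Gam2 g ginv a c n x y * sqrtg g x y *
               (rh x y * v c x y * v n x y + ginv c n x y * P x y)))
       + 3 * rh x y * sqrtg g x y * v a x y * W x y = 0)
  /\ sum2 (fun a => v a x y * pd2 a W x y) - (qc g V x y) ^ 2 = 0
  /\ sum2 (fun b => pd2 b (fun x y => sqrtg g x y *
               (rh x y * E x y + P x y) * v b x y) x y)
     + 2 * sqrtg g x y * (rh x y * E x y + P x y) * W x y = 0.

Definition open2 (U : R -> R -> Prop) : Prop :=
  forall x y, U x y -> exists eps, 0 < eps /\
    forall x' y', Rabs (x' - x) < eps -> Rabs (y' - y) < eps -> U x' y'.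

(* Main.v *)
Require Import Defs.
From Stdlib Require Import Reals Lra.
From Coquelicot Require Import Coquelicot.
Open Scope R_scope.

Lemma loc1 (U : R -> R -> Prop) x y : open2 U -> U x y -> locally x (fun t => U t y).
Proof.
  intros HU Hu; destruct (HU x y Hu) as [eps [He H]].
  exists (mkposreal eps He); intros t Ht; apply H.
  - exact Ht.
  - replace (y - y) with 0 by ring; rewrite Rabs_R0; exact He.
Qed.

Lemma loc2 (U : R -> R -> Prop) x y : open2 U -> U x y -> locally y (fun t => U x t).
Proof.
  intros HU Hu; destruct (HU x y Hu) as [eps [He H]].
  exists (mkposreal eps He); intros t Ht; apply H.
  - replace (x - x) with 0 by ring; rewrite Rabs_R0; exact He.
  - exact Ht.
Qed.

Lemma pd_s_loc (U : R -> R -> Prop) (F : fld3) (f : fld2) c x y r a :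
  open2 U -> U x y -> (forall x' y', U x' y' -> F x' y' r = c * f x' y') ->
  pd3 (s a) F x y r = c * pd2 a f x y.
Proof.
  intros HU Hu H. destruct a; simpl; rewrite <- Derive_scal; apply Derive_ext_loc.
  - destruct (loc1 U x y HU Hu) as [eps He]. exists eps. intros t Ht. apply H, He, Ht.
  - destruct (loc2 U x y HU Hu) as [eps He]. exists eps. intros t Ht. apply H, He, Ht.
Qed.

Lemma pd_rad_loc (F : fld3) (h : R -> R) x y r :
  0 < r -> (forall t, 0 < t -> F x y t = h t) -> pd3 rad F x y r = Derive h r.
Proof.
  intros Hr H; simpl; apply Derive_ext_loc.
  exists (mkposreal r Hr); intros t Ht. apply H.
  change (Rabs (t - r) < r) in Ht. apply Rabs_def2 in Ht. lra.
Qed.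

Lemma const_pos (f : R -> R) :
  (forall t, 0 < t -> is_derive f t 0) -> forall t, 0 < t -> f t = f 1.
Proof.
  intros H t Ht.
  destruct (Rtotal_order t 1) as [Hl|[He|Hg]].
  - apply eq_is_derive; [intros u Hu; apply H; lra | lra].
  - subst; reflexivity.
  - symmetry; apply eq_is_derive; [intros u Hu; apply H; lra | lra].
Qed.

Lemma sqrtG_eq g x y r : sqrtG g x y r = r ^ 2 * sqrtg g x y.
Proof.
  unfold sqrtG, sqrtg, det3, det2, Gmet; simpl.
  replace (r * (r * 1) * g i1 i1 x y *
    (r * (r * 1) * g i2 i2 x y * 1 - 0 * 0) -
    r * (r * 1) * g i1 i2 x y * (r * (r * 1) * g i2 i1 x y * 1 - 0 * 0) +
    0 * (r * (r * 1) * g i2 i1 x y * 0 - r * (r * 1) * g i2 i2 x y * 0))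
  with ((r^2)^2 * (g i1 i1 x y * g i2 i2 x y - g i1 i2 x y * g i2 i1 x y)) by ring.
  rewrite sqrt_mult_alt by (apply pow2_ge_0). rewrite sqrt_pow2 by (apply pow2_ge_0). reflexivity.
Qed.

Lemma inv_unique2 (A B C : ix -> ix -> R) :
  (forall a b, sum2 (fun c => A a c * B c b) = delta2 a b) ->
  (forall a b, sum2 (fun c => B a c * C c b) = delta2 a b) ->
  forall a b, A a b = C a b.
Proof.
  intros H1 H2 a b.
  replace (A a b) with (A a i1 * delta2 i1 b + A a i2 * delta2 i2 b) by (destruct b; simpl; ring).
  rewrite <- (H2 i1 b), <- (H2 i2 b).
  replace (C a b) with (delta2 a i1 * C i1 b + delta2 a i2 * C i2 b) by (destruct a; simpl; ring).
  rewrite <- (H1 a i1), <- (H1 a i2).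
  unfold sum2; ring.
Qed.


Lemma Ginv_rad_l g Ginv x y r :
  (forall i j, sum3 (fun k => Gmet g i k x y r * Ginv k j x y r) = delta3 i j /\
      sum3 (fun k => Ginv i k x y r * Gmet g k j x y r) = delta3 i j) ->
  forall j, Ginv rad j x y r = delta3 rad j.
Proof.
  intros HG j; destruct (HG rad j) as [H _]; unfold sum3, Gmet in H; destruct j; simpl in *; lra.
Qed.

Lemma Ginv_rad_r g Ginv x y r :
  (forall i j, sum3 (fun k => Gmet g i k x y r * Ginv k j x y r) = delta3 i j /\
      sum3 (fun k => Ginv i k x y r * Gmet g k j x y r) = delta3 i j) ->
  forall i, Ginv i rad x y r = delta3 i rad.
Proof.
  intros HG i; destruct (HG i rad) as [_ H]; unfold sum3, Gmet in H; destruct i; simpl in *; lra.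
Qed.

Lemma Ginv_ss g ginv Ginv x y r : 0 < r ->
  (forall i j, sum3 (fun k => Gmet g i k x y r * Ginv k j x y r) = delta3 i j /\
      sum3 (fun k => Ginv i k x y r * Gmet g k j x y r) = delta3 i j) ->
  (forall a b, sum2 (fun c => g a c x y * ginv c b x y) = delta2 a b) ->
  forall a b, Ginv (s a) (s b) x y r = ginv a b x y / r ^ 2.
Proof.
  intros Hr HG Hg a b.
  assert (E := inv_unique2 (fun a b => r ^ 2 * Ginv (s a) (s b) x y r)
     (fun a b => g a b x y) (fun a b => ginv a b x y)).
  simpl in E. rewrite <- E; [field; lra | | exact Hg].
  intros a' b'. destruct (HG (s a') (s b')) as [_ H]. unfold sum3, sum2, Gmet in *; simpl in *.
  rewrite <- H. ring.
Qed.

Lemma pdG_ss g b c d x y r : pd3 (s b) (Gmet g (s c) (s d)) x y r = r ^ 2 * pd2 b (g c d) x y.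
Proof. destruct b; unfold pd3, pd2, Gmet; rewrite <- Derive_scal; reflexivity. Qed.

Lemma pdG_rss g c d x y r : pd3 rad (Gmet g (s c) (s d)) x y r = 2 * r * g c d x y.
Proof. unfold pd3, Gmet. apply is_derive_unique. auto_derive; auto. ring. Qed.

Lemma pdG_sr g j c x y r : pd3 j (Gmet g (s c) rad) x y r = 0.
Proof. destruct j as [[|]|]; unfold pd3, Gmet; apply Derive_const. Qed.
Lemma pdG_rs g j c x y r : pd3 j (Gmet g rad (s c)) x y r = 0.
Proof. destruct j as [[|]|]; unfold pd3, Gmet; apply Derive_const. Qed.
Lemma pdG_rr g j x y r : pd3 j (Gmet g rad rad) x y r = 0.
Proof. destruct j as [[|]|]; unfold pd3, Gmet; apply Derive_const. Qed.

Definition Gc g ginv (i j k : ix3) x y r : R :=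
  match i, j, k with
  | s a, s b, s c => Gam2 g ginv a b c x y
  | s a, s b, rad => delta2 a b / r
  | s a, rad, s c => delta2 a c / r
  | rad, s b, s c => - r * g b c x y
  | _, _, _ => 0
  end.

Lemma Gam3_eq g ginv Ginv x y r : 0 < r ->
  (forall i j, sum3 (fun k => Gmet g i k x y r * Ginv k j x y r) = delta3 i j /\
      sum3 (fun k => Ginv i k x y r * Gmet g k j x y r) = delta3 i j) ->
  (forall a b, sum2 (fun c => g a c x y * ginv c b x y) = delta2 a b) ->
  (forall a b, sum2 (fun c => ginv a c x y * g c b x y) = delta2 a b) ->
  forall i j k, Gam3 g Ginv i j k x y r = Gc g ginv i j k x y r.
Proof.
  intros Hr HG Hg1 Hg2 i j k.
  assert (E1 := Ginv_rad_l g Ginv x y r HG).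
  assert (E2 := Ginv_rad_r g Ginv x y r HG).
  assert (E3 := Ginv_ss g ginv Ginv x y r Hr HG Hg1).
  unfold Gam3, sum3.
  destruct i as [a|]; destruct j as [b|]; destruct k as [c|]; simpl Gc;
  rewrite ?E1, ?E2, ?E3, ?pdG_ss, ?pdG_rss, ?pdG_sr, ?pdG_rs, ?pdG_rr; simpl delta3.
  - unfold Gam2, sum2. field. lra.
  - rewrite <- (Hg2 a b). unfold sum2. field. lra.
  - rewrite <- (Hg2 a c). unfold sum2. field. lra.
  - field. lra.
  - field; lra.
  - field; lra.
  - field; lra.
  - field; lra.
Qed.

Lemma divD1_eq g Ginv T x y r :
  divD1 g Ginv T x y r = sum3 (fun j => pd3 j (T j) x y r).
Proof. unfold divD1, sum3. ring. Qed.

Lemma divD2_eq g Ginv T i x y r :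
  divD2 g Ginv T i x y r = sum3 (fun j => pd3 j (T i j) x y r)
   + sum3 (fun j => sum3 (fun l => Gam3 g Ginv i j l x y r * T l j x y r)).
Proof. unfold divD2, sum3. ring. Qed.

Lemma iff_scale (k A B : R) : k <> 0 -> A = k * B -> (A = 0 <-> B = 0).
Proof.
  intros Hk E; rewrite E; split; intro H.
  - destruct (Rmult_integral _ _ H); [contradiction | assumption].
  - rewrite H; ring.
Qed.

Lemma D_t2 c r : Derive (fun t => t ^ 2 * c) r = 2 * r * c.
Proof. apply is_derive_unique; auto_derive; auto; ring. Qed.
Lemma D_t1 c r : Derive (fun t => t * c) r = c.
Proof. apply is_derive_unique; auto_derive; auto; ring. Qed.

Definition ex2 (a : ix) (f : fld2) (x y : R) : Prop :=
  match a with
  | i1 => ex_derive (fun t => f t y) x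
  | i2 => ex_derive (fun t => f x t) y
  end.

Lemma pd2_mult a (f h : fld2) x y : ex2 a f x y -> ex2 a h x y ->
  pd2 a (fun x y => f x y * h x y) x y = pd2 a f x y * h x y + f x y * pd2 a h x y.
Proof. destruct a; simpl; intros.
  - exact (Derive_mult (fun t => f t y) (fun t => h t y) x H H0).
  - exact (Derive_mult (fun t => f x t) (fun t => h x t) y H H0). Qed.

Lemma ex2_mult a (f h : fld2) x y : ex2 a f x y -> ex2 a h x y -> ex2 a (fun x y => f x y * h x y) x y.
Proof. destruct a; simpl; intros.
  - exact (ex_derive_mult (fun t => f t y) (fun t => h t y) x H H0).
  - exact (ex_derive_mult (fun t => f x t) (fun t => h x t) y H H0). Qed.

Lemma ex2_sqrtg a g x y :
  (forall c d, ex2 a (g c d) x y) -> 0 < det2 g x y -> ex2 a (sqrtg g) x y.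
Proof.
  intros H D. unfold sqrtg, det2 in *. destruct a; simpl in *.
  - auto_derive. repeat split; try apply H. exact D.
  - auto_derive. repeat split; try apply H. exact D.
Qed.

Theorem mainTheorem1
  (U : R -> R -> Prop)                 (* open domain of surface coordinates *)
  (g ginv : ix -> ix -> R -> R -> R)   (* metric g_{ab} of the unit sphere, inverse g^{ab} *)
  (Ginv : ix3 -> ix3 -> R -> R -> R -> R)  (* inverse 3D metric G^{ij} *)
  (rho e : R -> R -> R -> R)           (* density, specific thermal energy *)
  (V : ix3 -> R -> R -> R -> R)        (* contravariant velocity components *)
  (Pfun : R -> R -> R)                 (* equation of state P = P(rho, e) *)
  (HU : open2 U)
  (* g is the metric of the unit sphere in the surface coordinates:
     pullback of the Euclidean metric by a chart X of the unit sphere *)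
  (Hsphere : exists X : nat -> R -> R -> R,
      forall x y, U x y ->
        (forall k, ex_derive (fun t => X k t y) x /\ ex_derive (fun t => X k x t) y) /\
        X 0%nat x y ^ 2 + X 1%nat x y ^ 2 + X 2%nat x y ^ 2 = 1 /\
        (forall a b, g a b x y =
           pd2 a (X 0%nat) x y * pd2 b (X 0%nat) x y
         + pd2 a (X 1%nat) x y * pd2 b (X 1%nat) x y
         + pd2 a (X 2%nat) x y * pd2 b (X 2%nat) x y))
  (Hg_diff : forall x y, U x y -> forall a b,
      ex_derive (fun t => g a b t y) x /\ ex_derive (fun t => g a b x t) y)
  (Hginv : forall x y, U x y -> forall a b,
      sum2 (fun c => g a c x y * ginv c b x y) = delta2 a b /\
      sum2 (fun c => ginv a c x y * g c b x y) = delta2 a b)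
  (HGinv : forall x y r, U x y -> 0 < r -> forall i j,
      sum3 (fun k => Gmet g i k x y r * Ginv k j x y r) = delta3 i j /\
      sum3 (fun k => Ginv i k x y r * Gmet g k j x y r) = delta3 i j)
  (Hdiff : forall x y r, U x y -> 0 < r ->
      forall F, (F = rho \/ F = e \/ exists i, F = V i) ->
        ex_derive (fun t => F t y r) x /\ ex_derive (fun t => F x t r) y
        /\ ex_derive (fun t => F x y t) r)
  (Hrho : forall x y r, U x y -> 0 < r -> 0 < rho x y r)
  (Hconical : forall x y r, U x y -> 0 < r -> conical g Ginv rho e V x y r) :
  forall x y r, U x y -> 0 < r ->
    (Euler3D g Ginv Pfun rho e V x y r <-> SurfaceSystem g ginv Pfun rho e V x y).
Proof.
  intros x y r Hu Hr.
  destruct Hsphere as [X HX].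
  assert (gsym : forall x y, U x y -> forall a b, g a b x y = g b a x y).
  { intros x' y' H a b; destruct (HX _ _ H) as [_ [_ Hg]]; rewrite !Hg; ring. }
  assert (Hg1 : forall x y, U x y -> forall a b, sum2 (fun c => g a c x y * ginv c b x y) = delta2 a b)
    by (intros; apply Hginv; auto).
  assert (Hg2 : forall x y, U x y -> forall a b, sum2 (fun c => ginv a c x y * g c b x y) = delta2 a b)
    by (intros; apply Hginv; auto).
  assert (ginvsym : forall x y, U x y -> forall a b, ginv a b x y = ginv b a x y).
  { intros x' y' H a b. symmetry.
    apply (inv_unique2 (fun a b => ginv b a x' y') (fun a b => g a b x' y') (fun a b => ginv a b x' y')).
    - intros a' b'. simpl. unfold sum2. rewrite (gsym _ _ H i1 b'), (gsym _ _ H i2 b').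
      replace (delta2 a' b') with (delta2 b' a') by (destruct a', b'; reflexivity).
      rewrite <- (Hg1 _ _ H b' a'). unfold sum2; ring.
    - intros; apply Hg1; auto. }
  assert (qpos : forall x y, U x y -> forall w : ix -> R,
     0 <= sum2 (fun a => sum2 (fun b => g a b x y * w a * w b))).
  { intros x' y' H w. destruct (HX _ _ H) as [_ [_ Hg]]. unfold sum2; rewrite !Hg.
    set (p10 := pd2 i1 (X 0%nat) x' y'). set (p11 := pd2 i1 (X 1%nat) x' y').
    set (p12 := pd2 i1 (X 2%nat) x' y'). set (p20 := pd2 i2 (X 0%nat) x' y').
    set (p21 := pd2 i2 (X 1%nat) x' y'). set (p22 := pd2 i2 (X 2%nat) x' y').
    match goal with |- 0 <= ?e => replace e with ((w i1 * p10 + w i2 * p20)^2 + (w i1 * p11 + w i2 * p21)^2 + (w i1 * p12 + w i2 * p22)^2) by ring end.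
    repeat apply Rplus_le_le_0_compat; apply pow2_ge_0. }
  assert (detpos : forall x y, U x y -> 0 < det2 g x y).
  { intros x' y' H. destruct (HX _ _ H) as [_ [_ Hg]].
    assert (N : det2 g x' y' <> 0).
    { intro D.
      assert (E : det2 g x' y' * (ginv i1 i1 x' y' * ginv i2 i2 x' y' - ginv i1 i2 x' y' * ginv i2 i1 x' y') = 1).
      { pose proof (Hg1 _ _ H i1 i1) as A1. pose proof (Hg1 _ _ H i1 i2) as A2.
        pose proof (Hg1 _ _ H i2 i1) as A3. pose proof (Hg1 _ _ H i2 i2) as A4.
        unfold sum2 in *; simpl in A1, A2, A3, A4. unfold det2.
        transitivity ((g i1 i1 x' y' * ginv i1 i1 x' y' + g i1 i2 x' y' * ginv i2 i1 x' y') *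
                      (g i2 i1 x' y' * ginv i1 i2 x' y' + g i2 i2 x' y' * ginv i2 i2 x' y') -
                      (g i1 i1 x' y' * ginv i1 i2 x' y' + g i1 i2 x' y' * ginv i2 i2 x' y') *
                      (g i2 i1 x' y' * ginv i1 i1 x' y' + g i2 i2 x' y' * ginv i2 i1 x' y')).
        - ring.
        - rewrite A1, A2, A3, A4; ring. }
      rewrite D in E; lra. }
    assert (0 <= det2 g x' y').
    { unfold det2; rewrite !Hg.
      set (p10 := pd2 i1 (X 0%nat) x' y'). set (p11 := pd2 i1 (X 1%nat) x' y').
      set (p12 := pd2 i1 (X 2%nat) x' y'). set (p20 := pd2 i2 (X 0%nat) x' y').
      set (p21 := pd2 i2 (X 1%nat) x' y'). set (p22 := pd2 i2 (X 2%nat) x' y').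
      replace (_ - _) with ((p10*p21 - p11*p20)^2 + (p10*p22 - p12*p20)^2 + (p11*p22-p12*p21)^2) by ring.
      repeat apply Rplus_le_le_0_compat; apply pow2_ge_0. }
    lra. }
  assert (Gam : forall x y t, U x y -> 0 < t -> forall i j k, Gam3 g Ginv i j k x y t = Gc g ginv i j k x y t).
  { intros x' y' t H Ht. apply Gam3_eq; auto. }
  assert (GinvS : forall x y t, U x y -> 0 < t -> forall a b, Ginv (s a) (s b) x y t = ginv a b x y / t^2).
  { intros x' y' t H Ht. apply (Ginv_ss g); auto. }
  assert (GinvR1 : forall x y t, U x y -> 0 < t -> forall j, Ginv rad j x y t = delta3 rad j).
  { intros x' y' t H Ht. apply (Ginv_rad_l g); auto. }
  assert (GinvR2 : forall x y t, U x y -> 0 < t -> forall i, Ginv i rad x y t = delta3 i rad).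
  { intros x' y' t H Ht. apply (Ginv_rad_r g); auto. }
  assert (rho_c : forall x y t, U x y -> 0 < t -> rho x y t = rho x y 1).
  { intros x' y' t H Ht. apply (const_pos (fun t => rho x' y' t)); [|exact Ht].
    intros u Hu'. destruct (Hdiff x' y' u H Hu' rho (or_introl eq_refl)) as [_ [_ D]].
    destruct (Hconical x' y' u H Hu') as [C _]. simpl in C. rewrite <- C. apply Derive_correct; exact D. }
  assert (e_c : forall x y t, U x y -> 0 < t -> e x y t = e x y 1).
  { intros x' y' t H Ht. apply (const_pos (fun t => e x' y' t)); [|exact Ht].
    intros u Hu'. destruct (Hdiff x' y' u H Hu' e (or_intror (or_introl eq_refl))) as [_ [_ D]].
    destruct (Hconical x' y' u H Hu') as [_ [C _]]. simpl in C. rewrite <- C. apply Derive_correct; exact D. }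
  assert (W_c : forall x y t, U x y -> 0 < t -> V rad x y t = V rad x y 1).
  { intros x' y' t H Ht. apply (const_pos (fun t => V rad x' y' t)); [|exact Ht].
    intros u Hu'. destruct (Hdiff x' y' u H Hu' (V rad) (or_intror (or_intror (ex_intro _ rad eq_refl)))) as [_ [_ D]].
    destruct (Hconical x' y' u H Hu') as [_ [_ C]]. specialize (C rad).
    unfold cov1, sum3 in C. rewrite !(Gam x' y' u H Hu') in C. simpl in C.
    replace 0 with (Derive (fun t => V rad x' y' t) u) by lra. apply Derive_correct; exact D. }
  assert (v_c : forall x y t, U x y -> 0 < t -> forall a, V (s a) x y t = V (s a) x y 1 / t).
  { intros x' y' t H Ht a.
    assert (K : t * V (s a) x' y' t = 1 * V (s a) x' y' 1).
    { apply (const_pos (fun t => t * V (s a) x' y' t)); [|exact Ht].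
      intros u Hu'. destruct (Hdiff x' y' u H Hu' (V (s a)) (or_intror (or_intror (ex_intro _ (s a) eq_refl)))) as [_ [_ D]].
      destruct (Hconical x' y' u H Hu') as [_ [_ C]]. specialize (C (s a)).
      unfold cov1, sum3 in C. rewrite !(Gam x' y' u H Hu') in C. simpl in C.
      replace 0 with (Derive (fun t => t * V (s a) x' y' t) u).
      - apply Derive_correct. apply ex_derive_mult; [apply ex_derive_id | exact D].
      - rewrite Derive_mult; [|apply ex_derive_id | exact D].
        rewrite Derive_id.
        change (pd3 rad (V (s a)) x' y' u) with (Derive (V (s a) x' y') u) in C.
        destruct a; simpl in C;
        match type of C with Derive ?f u + ?q = 0 =>
          change (Derive _ u) with (Derive f u); replace (Derive f u) with (-q) by lra end; field; lra. }
    transitivity (t * V (s a) x' y' t / t); [field; lra|]. rewrite K. field. lra. }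
  assert (sq : forall x y t, sqrtG g x y t = t^2 * sqrtg g x y) by (intros; apply sqrtG_eq).
  assert (E_c : forall x y t, U x y -> 0 < t -> E3 g e V x y t = E_s g e V x y).
  { intros x' y' t H Ht. unfold E_s, E3, sum3, Gmet; simpl.
    rewrite (e_c _ _ _ H Ht), (W_c _ _ _ H Ht), (v_c _ _ _ H Ht i1), (v_c _ _ _ H Ht i2).
    field. lra. }
  assert (EC : divD1 g Ginv (fun j x y r => sqrtG g x y r * rho x y r * V j x y r) x y r =
       r * (sum2 (fun b => pd2 b (fun x y => rho_s rho x y * sqrtg g x y * v_s V b x y) x y)
            + 2 * rho_s rho x y * sqrtg g x y * V3_s V x y)).
  { rewrite divD1_eq. unfold sum3, sum2.
    rewrite (pd_s_loc U _ (fun x y => rho_s rho x y * sqrtg g x y * v_s V i1 x y) r x y r i1 HU Hu).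
    2: { intros x' y' H. cbv beta. rewrite sq, (rho_c _ _ _ H Hr), (v_c _ _ _ H Hr). unfold rho_s, v_s. field. lra. }
    rewrite (pd_s_loc U _ (fun x y => rho_s rho x y * sqrtg g x y * v_s V i2 x y) r x y r i2 HU Hu).
    2: { intros x' y' H. cbv beta. rewrite sq, (rho_c _ _ _ H Hr), (v_c _ _ _ H Hr). unfold rho_s, v_s. field. lra. }
    rewrite (pd_rad_loc _ (fun t => t^2 * (rho_s rho x y * sqrtg g x y * V3_s V x y)) x y r Hr).
    2: { intros t Ht. rewrite sq, (rho_c _ _ _ Hu Ht), (W_c _ _ _ Hu Ht). unfold rho_s, V3_s. ring. }
    rewrite D_t2. ring. }
  assert (EE : divD1 g Ginv (fun j x y r => sqrtG g x y r *
            (rho x y r * E3 g e V x y r + P3 Pfun rho e x y r) * V j x y r) x y r =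
       r * (sum2 (fun b => pd2 b (fun x y => sqrtg g x y *
               (rho_s rho x y * E_s g e V x y + P_s Pfun rho e x y) * v_s V b x y) x y)
     + 2 * sqrtg g x y * (rho_s rho x y * E_s g e V x y + P_s Pfun rho e x y) * V3_s V x y)).
  { rewrite divD1_eq. unfold sum3, sum2.
    rewrite (pd_s_loc U _ (fun x y => sqrtg g x y *
               (rho_s rho x y * E_s g e V x y + P_s Pfun rho e x y) * v_s V i1 x y) r x y r i1 HU Hu).
    2: { intros x' y' H. cbv beta. unfold P3. rewrite sq, (E_c _ _ _ H Hr), (rho_c _ _ _ H Hr), (e_c _ _ _ H Hr), (v_c _ _ _ H Hr).
         unfold P_s, rho_s, e_s, v_s. field. lra. }
    rewrite (pd_s_loc U _ (fun x y => sqrtg g x y *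
               (rho_s rho x y * E_s g e V x y + P_s Pfun rho e x y) * v_s V i2 x y) r x y r i2 HU Hu).
    2: { intros x' y' H. cbv beta. unfold P3. rewrite sq, (E_c _ _ _ H Hr), (rho_c _ _ _ H Hr), (e_c _ _ _ H Hr), (v_c _ _ _ H Hr).
         unfold P_s, rho_s, e_s, v_s. field. lra. }
    rewrite (pd_rad_loc _ (fun t => t^2 * (sqrtg g x y * (rho_s rho x y * E_s g e V x y + P_s Pfun rho e x y) * V3_s V x y)) x y r Hr).
    2: { intros t Ht. unfold P3. rewrite sq, (E_c _ _ _ Hu Ht), (rho_c _ _ _ Hu Ht), (e_c _ _ _ Hu Ht), (W_c _ _ _ Hu Ht).
         unfold P_s, rho_s, e_s, V3_s. ring. }
    rewrite D_t2. ring. }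
  assert (EM : forall a, divD2 g Ginv (fun i j x y r => sqrtG g x y r *
            (rho x y r * V i x y r * V j x y r + Ginv i j x y r * P3 Pfun rho e x y r)) (s a) x y r =
       sum2 (fun b => pd2 b (fun x y => sqrtg g x y *
               (rho_s rho x y * v_s V a x y * v_s V b x y + ginv a b x y * P_s Pfun rho e x y)) x y)
       + sum2 (fun c => sum2 (fun n => Gam2 g ginv a c n x y * sqrtg g x y *
               (rho_s rho x y * v_s V c x y * v_s V n x y + ginv c n x y * P_s Pfun rho e x y)))
       + 3 * rho_s rho x y * sqrtg g x y * v_s V a x y * V3_s V x y).
  { intro a. rewrite divD2_eq. unfold sum3, sum2. cbv beta.
    rewrite (pd_s_loc U _ (fun x y => sqrtg g x y *
               (rho_s rho x y * v_s V a x y * v_s V i1 x y + ginv a i1 x y * P_s Pfun rho e x y)) 1 x y r i1 HU Hu).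
    2: { intros x' y' H. unfold P3. rewrite sq, (GinvS _ _ _ H Hr), (rho_c _ _ _ H Hr), (e_c _ _ _ H Hr), !(v_c _ _ _ H Hr).
         unfold P_s, rho_s, e_s, v_s. field. lra. }
    rewrite (pd_s_loc U _ (fun x y => sqrtg g x y *
               (rho_s rho x y * v_s V a x y * v_s V i2 x y + ginv a i2 x y * P_s Pfun rho e x y)) 1 x y r i2 HU Hu).
    2: { intros x' y' H. unfold P3. rewrite sq, (GinvS _ _ _ H Hr), (rho_c _ _ _ H Hr), (e_c _ _ _ H Hr), !(v_c _ _ _ H Hr).
         unfold P_s, rho_s, e_s, v_s. field. lra. }
    rewrite (pd_rad_loc _ (fun t => t * (sqrtg g x y * rho_s rho x y * v_s V a x y * V3_s V x y)) x y r Hr).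
    2: { intros t Ht. unfold P3. rewrite sq, (GinvR2 _ _ _ Hu Ht), (rho_c _ _ _ Hu Ht), (W_c _ _ _ Hu Ht), (v_c _ _ _ Hu Ht).
         cbn [delta3]. unfold rho_s, v_s, V3_s. field. lra. }
    rewrite D_t1.
    rewrite !(Gam x y r Hu Hr). cbn [Gc]. unfold P3.
    rewrite sq, (rho_c _ _ _ Hu Hr), (e_c _ _ _ Hu Hr), !(v_c _ _ _ Hu Hr), (W_c _ _ _ Hu Hr),
      !(GinvS _ _ _ Hu Hr), ?(GinvR1 _ _ _ Hu Hr), ?(GinvR2 _ _ _ Hu Hr).
    cbn [delta3]. unfold P_s, rho_s, e_s, v_s, V3_s.
    destruct a; cbn [delta2]; rewrite ?(ginvsym x y Hu i2 i1); field; lra. }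
  assert (ER : divD2 g Ginv (fun i j x y r => sqrtG g x y r *
            (rho x y r * V i x y r * V j x y r + Ginv i j x y r * P3 Pfun rho e x y r)) rad x y r =
       r * (sum2 (fun b => pd2 b (fun x y => (rho_s rho x y * sqrtg g x y * v_s V b x y) * V3_s V x y) x y)
            + 2 * rho_s rho x y * sqrtg g x y * V3_s V x y ^ 2
            - rho_s rho x y * sqrtg g x y * sum2 (fun a => sum2 (fun b => g a b x y * v_s V a x y * v_s V b x y)))).
  { rewrite divD2_eq. unfold sum3, sum2. cbv beta.
    rewrite (pd_s_loc U _ (fun x y => (rho_s rho x y * sqrtg g x y * v_s V i1 x y) * V3_s V x y) r x y r i1 HU Hu).
    2: { intros x' y' H. unfold P3. rewrite sq, (GinvR1 _ _ _ H Hr), (rho_c _ _ _ H Hr), (W_c _ _ _ H Hr), !(v_c _ _ _ H Hr).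
         cbn [delta3]. unfold rho_s, v_s, V3_s. field. lra. }
    rewrite (pd_s_loc U _ (fun x y => (rho_s rho x y * sqrtg g x y * v_s V i2 x y) * V3_s V x y) r x y r i2 HU Hu).
    2: { intros x' y' H. unfold P3. rewrite sq, (GinvR1 _ _ _ H Hr), (rho_c _ _ _ H Hr), (W_c _ _ _ H Hr), !(v_c _ _ _ H Hr).
         cbn [delta3]. unfold rho_s, v_s, V3_s. field. lra. }
    rewrite (pd_rad_loc _ (fun t => t^2 * (sqrtg g x y * (rho_s rho x y * V3_s V x y ^ 2 + P_s Pfun rho e x y))) x y r Hr).
    2: { intros t Ht. unfold P3. rewrite sq, (GinvR1 _ _ _ Hu Ht), (rho_c _ _ _ Hu Ht), (e_c _ _ _ Hu Ht), (W_c _ _ _ Hu Ht).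
         cbn [delta3]. unfold P_s, rho_s, e_s, V3_s. ring. }
    rewrite D_t2.
    rewrite !(Gam x y r Hu Hr). cbn [Gc]. unfold P3.
    rewrite sq, (rho_c _ _ _ Hu Hr), (e_c _ _ _ Hu Hr), !(v_c _ _ _ Hu Hr), (W_c _ _ _ Hu Hr),
      !(GinvS _ _ _ Hu Hr), ?(GinvR1 _ _ _ Hu Hr), ?(GinvR2 _ _ _ Hu Hr).
    cbn [delta3]. unfold P_s, rho_s, e_s, v_s, V3_s.
    pose proof (Hg1 x y Hu i1 i1) as A1. pose proof (Hg1 x y Hu i2 i2) as A2.
    unfold sum2 in A1, A2; cbn [delta2] in A1, A2.
    match goal with |- ?L = ?R => assert (Hd : L - R = (- r * sqrtg g x y * Pfun (rho x y 1) (e x y 1)) *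
       ((g i1 i1 x y * ginv i1 i1 x y + g i1 i2 x y * ginv i2 i1 x y)
        + (g i2 i1 x y * ginv i1 i2 x y + g i2 i2 x y * ginv i2 i2 x y) - 2)) by (field; lra) end.
    rewrite A1, A2 in Hd. lra. }
  assert (H01 : 0 < 1) by lra.
  assert (exrho : forall b, ex2 b (rho_s rho) x y).
  { destruct (Hdiff x y 1 Hu H01 rho (or_introl eq_refl)) as [D1 [D2 _]]. intros [|]; assumption. }
  assert (exW : forall b, ex2 b (V3_s V) x y).
  { destruct (Hdiff x y 1 Hu H01 (V rad) (or_intror (or_intror (ex_intro _ rad eq_refl)))) as [D1 [D2 _]].
    intros [|]; assumption. }
  assert (exv : forall b c, ex2 b (v_s V c) x y).
  { intros b c. destruct (Hdiff x y 1 Hu H01 (V (s c)) (or_intror (or_intror (ex_intro _ (s c) eq_refl)))) as [D1 [D2 _]].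
    destruct b; [exact (ex_derive_scal (fun t => V (s c) t y 1) 1 x D1) | exact (ex_derive_scal (fun t => V (s c) x t 1) 1 y D2)]. }
  assert (exsq : forall b, ex2 b (sqrtg g) x y).
  { intro b. apply ex2_sqrtg; [| apply detpos; exact Hu].
    intros c d. destruct (Hg_diff x y Hu c d) as [D1 D2]. destruct b; assumption. }
  assert (exF : forall b, ex2 b (fun x y => rho_s rho x y * sqrtg g x y * v_s V b x y) x y).
  { intro b. exact (ex2_mult b (fun x y => rho_s rho x y * sqrtg g x y) (v_s V b) x y
        (ex2_mult b _ _ x y (exrho b) (exsq b)) (exv b b)). }
  assert (pos : 0 < rho_s rho x y * sqrtg g x y).
  { apply Rmult_lt_0_compat; [apply Hrho; auto | apply sqrt_lt_R0, detpos, Hu]. }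
  assert (KR : sum2 (fun b => pd2 b (fun x y => rho_s rho x y * sqrtg g x y * v_s V b x y) x y)
            + 2 * rho_s rho x y * sqrtg g x y * V3_s V x y = 0 ->
     sum2 (fun b => pd2 b (fun x y => (rho_s rho x y * sqrtg g x y * v_s V b x y) * V3_s V x y) x y)
            + 2 * rho_s rho x y * sqrtg g x y * V3_s V x y ^ 2
            - rho_s rho x y * sqrtg g x y * sum2 (fun a => sum2 (fun b => g a b x y * v_s V a x y * v_s V b x y))
     = rho_s rho x y * sqrtg g x y *
       (sum2 (fun a => v_s V a x y * pd2 a (V3_s V) x y) - qc g V x y ^ 2)).
  { intro C0. unfold qc. rewrite pow2_sqrt.
    2: { specialize (qpos x y Hu (fun a => v_s V a x y)). exact qpos. }
    unfold sum2 in *.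
    rewrite (pd2_mult i1 (fun x y => rho_s rho x y * sqrtg g x y * v_s V i1 x y) (V3_s V) x y (exF i1) (exW i1)).
    rewrite (pd2_mult i2 (fun x y => rho_s rho x y * sqrtg g x y * v_s V i2 x y) (V3_s V) x y (exF i2) (exW i2)).
    match type of C0 with ?P1 + ?P2 + ?Q = 0 => replace P1 with (- P2 - Q) by lra end.
    ring. }
  assert (mul0 : forall k Z, 0 < k -> k * Z = 0 -> Z = 0).
  { intros k Z Hk Hx. destruct (Rmult_integral _ _ Hx); [lra | assumption]. }
  unfold Euler3D, SurfaceSystem. cbv zeta.
  rewrite EC, EE.
  split.
  - intros [C0 [M0 E0]].
    apply mul0 in C0; [|exact Hr]. apply mul0 in E0; [|exact Hr].
    split; [exact C0|]. split; [|split; [|exact E0]].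
    + intro a. rewrite <- EM. apply M0.
    + specialize (M0 rad). rewrite ER in M0. apply mul0 in M0; [|exact Hr].
      rewrite (KR C0) in M0. apply mul0 in M0; [exact M0 | exact pos].
  - intros [C0 [M0 [R0 E0]]].
    split; [rewrite C0; ring|]. split; [|rewrite E0; ring].
    intros [a|].
    + rewrite EM. apply M0.
    + rewrite ER, (KR C0), R0. ring.
Qed.
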